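(* Let $N=\{1,\dots,n\}$ be any set of agents and $M$ a set of $m$ chores with $m\le n+2$, where each agent $i$ has a normalized monotone cost function $c_i:2^M\to\mathbb{R}_{\ge0}$. Then an EFX allocation exists.
   Context: A cost function $c_i$ is normalized if $c_i(\emptyset)=0$ and monotone if $c_i(S\cup\{e\})\ge c_i(S)$ for all $S\subseteq M$, $e\in M$. An allocation is a partition $X=(X_1,\dots,X_n)$ of $M$ into $n$ (possibly empty) bundles, agent $i$ receiving $X_i$. $X$ is EFX if for all agents $i,j$ and every chore $e\in X_i$, $c_i(X_i\setminus\{e\})\le c_i(X_j)$. *)

(* Defs.v *)
From HB Require Import structures.
From mathcomp Require Import all_boot all_order all_algebra.
From mathcomp Require Import reals.
Set Implicit Arguments. Unset Strict Implicit. Unset Printing Implicit Defensive.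
Import Order.TTheory GRing.Theory Num.Theory.
Local Open Scope ring_scope.

Definition normalized (R : realType) (M : finType) (c : {set M} -> R) : Prop :=
  c set0 = 0.

Definition monotone (R : realType) (M : finType) (c : {set M} -> R) : Prop :=
  forall (S : {set M}) (e : M), c S <= c (e |: S).

Definition nonneg_cost (R : realType) (M : finType) (c : {set M} -> R) : Prop :=
  forall S : {set M}, 0 <= c S.

Definition is_allocation (n : nat) (M : finType) (X : 'I_n -> {set M}) : Prop :=
  (forall i j : 'I_n, i != j -> [disjoint X i & X j]) /\
  (\bigcup_(i < n) X i = [set: M]).

Definition EFX (R : realType) (n : nat) (M : finType)
    (c : 'I_n -> {set M} -> R) (X : 'I_n -> {set M}) : Prop :=
  forall (i j : 'I_n) (e : M), e \in X i -> c i (X i :\ e) <= c i (X j).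

(* Main.v *)
Require Import Defs.
From HB Require Import structures.
From mathcomp Require Import all_boot all_order all_algebra.
From mathcomp Require Import reals zify.
Import Order.TTheory GRing.Theory Num.Theory.
Local Open Scope ring_scope.
Set Implicit Arguments. Unset Strict Implicit. Unset Printing Implicit Defensive.

Section Two.
Variables (R : realType) (M : finType).
Implicit Types (c : {set M} -> R).

Lemma mono_sub c : monotone c -> forall S T : {set M}, S \subset T -> c S <= c T.
Proof.
move=> hm S T.
move: {2}#|T :\: S| (erefl #|T :\: S|) => k; elim: k S => [|k IH] S hk hST.
  have -> : T = S.
    apply/eqP; rewrite eqEsubset hST andbT.
    by move/eqP: hk; rewrite cards_eq0 setD_eq0.
  by [].
have: (T :\: S) != set0 by rewrite -card_gt0 hk.
case/set0Pn => x; rewrite inE => /andP [xS xT].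
apply: le_trans (hm S x) _; apply: IH.
  have -> : T :\: (x |: S) = (T :\: S) :\ x.
    by apply/setP=> y; rewrite !inE; case: (y == x).
  by move: hk; rewrite (cardsD1 x) inE xS xT /= add1n => -[].
by apply/subsetP => y; rewrite !inE => /orP [/eqP->//|]; apply/subsetP.
Qed.

Lemma exmin (f : M -> R) (A : {set M}) : A != set0 ->
  exists2 z, z \in A & forall y, y \in A -> f z <= f y.
Proof.
case/set0Pn => a aA.
case: (@arg_minP _ _ _ a (mem A) f aA) => z zA hz.
by exists z.
Qed.


Definition heavyok c (P Q : {set M}) := forall e, e \in P ->
  c (P :\ e) <= c Q /\ (forall z, z \notin P -> z \notin Q -> c (P :\ e) <= c [set z]).
Definition tripleok c (T : {set M}) := forall e z, e \in T -> z \notin T ->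
  c (T :\ e) <= c [set z].
Definition TwoRes c1 c2 :=
  (exists T : {set M}, #|T| = 3%N /\ tripleok c1 T) \/
  (exists p p' q q' : M, uniq [:: p; p'; q; q'] /\
     heavyok c1 [set p; p'] [set q; q'] /\ heavyok c2 [set q; q'] [set p; p']).
Definition low2 c a b := forall z, z != a -> z != b ->
  c [set a] <= c [set z] /\ c [set b] <= c [set z].
Definition low3 c a b d := forall z, z != a -> z != b -> z != d ->
  [/\ c [set a] <= c [set z], c [set b] <= c [set z] & c [set d] <= c [set z]].

Lemma setD2l (p p' : M) : p != p' -> [set p; p'] :\ p = [set p'].
Proof.
move=> h; apply/setP => x; rewrite !inE.
by case: (eqVneq x p) => [->|] /=; rewrite ?eqxx ?(negbTE h) //= ?andbT.
Qed.

Lemma setD2r (p p' : M) : p != p' -> [set p; p'] :\ p' = [set p].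
Proof.
move=> h; apply/setP => x; rewrite !inE.
by case: (eqVneq x p') => [->|] /=; rewrite ?eqxx /= ?(negbTE h) ?orbF ?orbT ?andbT //; rewrite eq_sym (negbTE h).
Qed.

Lemma mono_pair c : monotone c -> forall a b : M,
  c [set a] <= c [set a; b] /\ c [set b] <= c [set a; b].
Proof.
move=> hm a b; split; apply: mono_sub => //; rewrite sub1set !inE eqxx ?orbT //.
Qed.

Lemma pairok c (p p' : M) (Q : {set M}) : p != p' ->
  (forall z, z != p -> z != p' -> z \notin Q ->
     c [set p] <= c [set z] /\ c [set p'] <= c [set z]) ->
  c [set p] <= c Q -> c [set p'] <= c Q -> heavyok c [set p; p'] Q.
Proof.
move=> hp hz h1 h2 e; rewrite !inE => /orP [/eqP->|/eqP->].
  rewrite setD2l //; split => // z; rewrite !inE negb_or => /andP [z1 z2] zQ.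
  by case: (hz z z1 z2 zQ).
rewrite setD2r //; split => // z; rewrite !inE negb_or => /andP [z1 z2] zQ.
by case: (hz z z1 z2 zQ).
Qed.

Lemma low2_sym c a b : low2 c a b -> low2 c b a.
Proof. by move=> h z z1 z2; case: (h z z2 z1). Qed.

Lemma ex_out3 (a b d : M) : (3 < #|M|)%N -> exists z : M, [/\ z != a, z != b & z != d].
Proof.
move=> hM.
have: ~~ ([set: M] \subset a |: [set b; d]).
  apply/negP => /subset_leq_card; rewrite cardsT cardsU1 cards2 => h.
  have := leq_trans hM h.
  by case: (a \notin _); case: (b != d).
case/subsetPn => z _; rewrite !inE !negb_or => /andP [za /andP [zb zd]].
by exists z.
Qed.

Lemma optD c a b q q' : monotone c -> a != b -> low2 c a b -> q != a -> q != b ->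
  heavyok c [set a; b] [set q; q'].
Proof.
move=> hm hab hl qa qb; apply: pairok => //.
- by move=> z z1 z2 _; apply: hl.
- apply: le_trans (mono_pair hm q q').1; by case: (hl q qa qb).
- apply: le_trans (mono_pair hm q q').1; by case: (hl q qa qb).
Qed.

Lemma optA c s x y w : monotone c -> x != w -> low2 c s x ->
  (forall z, z != s -> z != x -> z != y -> c [set w] <= c [set z]) ->
  y != s -> y != x -> c [set w] <= c [set s; y] ->
  heavyok c [set x; w] [set s; y].
Proof.
move=> hm hxw hl hw ys yx hwy; apply: pairok => //.
- move=> z z1 z2; rewrite !inE negb_or => /andP [z3 z4].
  split; last by apply: hw.
  by case: (hl z z3 z1).
- apply: le_trans (mono_pair hm s y).2; by case: (hl y ys yx).
Qed.

Lemma uniq4 (p p' q q' : M): p != p' -> p != q -> p != q' -> p' != q -> p' != q' ->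
  q != q' -> uniq [:: p; p'; q; q'].
Proof.
move=> *; rewrite /= !inE !negb_or; repeat (apply/andP; split) => //.
Qed.

Ltac neq := solve [assumption | rewrite eq_sym; assumption].

Lemma L3core c1 c2 e u v w : monotone c1 -> monotone c2 ->
  e != u -> e != v -> u != v -> w != e -> w != u -> w != v ->
  low3 c1 e u v -> low3 c2 e u v ->
  (forall z, z != e -> z != u -> z != v -> c1 [set w] <= c1 [set z]) ->
  c1 [set w] < c1 [set u; v] -> TwoRes c1 c2.
Proof.
move=> hm1 hm2 eu ev uv we wu wv l1 l2 hw hlt; right.
exists e, w, u, v; split.
  by apply: uniq4; neq.
split.
  apply: pairok; first by rewrite eq_sym.
  - move=> z z1 z2; rewrite !inE negb_or => /andP [z3 z4].
    split; last by apply: hw.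
    by case: (l1 z z1 z3 z4).
  - case: (l1 w we wu wv) => h _ _; apply: le_trans h _; exact: ltW.
  - exact: ltW.
apply: pairok => //.
- move=> z z1 z2; rewrite !inE negb_or => /andP [z3 z4].
  by case: (l2 z z3 z1 z2).
- apply: le_trans (mono_pair hm2 e w).2; by case: (l2 w we wu wv).
- apply: le_trans (mono_pair hm2 e w).2; by case: (l2 w we wu wv).
Qed.


Lemma low3_bad c a b d : low3 c a b d -> low3 c b a d.
Proof. by move=> h z z1 z2 z3; case: (h z z2 z1 z3). Qed.
Lemma low3_dab c a b d : low3 c a b d -> low3 c d a b.
Proof. by move=> h z z1 z2 z3; case: (h z z2 z3 z1). Qed.

Lemma setD3 (a b d : M) : a != b -> a != d -> b != d ->
  [/\ (a |: [set b; d]) :\ a = [set b; d],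
      (a |: [set b; d]) :\ b = [set a; d] &
      (a |: [set b; d]) :\ d = [set a; b]].
Proof.
move=> ab ad bd.
have ba : b != a by rewrite eq_sym.
have da : d != a by rewrite eq_sym.
have db : d != b by rewrite eq_sym.
split; apply/setP => x; rewrite !inE;
  (have [->|xa] := eqVneq x a; first by
     rewrite ?eqxx ?(negbTE ab) ?(negbTE ad) ?(negbTE bd) ?(negbTE ba)
          ?(negbTE da) ?(negbTE db));
  (have [->|xb] := eqVneq x b; first by
     rewrite ?eqxx ?(negbTE ab) ?(negbTE ad) ?(negbTE bd) ?(negbTE ba)
          ?(negbTE da) ?(negbTE db) ?(negbTE xa));
  by case: (x == d).
Qed.

Lemma L3 c1 c2 a b d : monotone c1 -> monotone c2 ->
  a != b -> a != d -> b != d -> low3 c1 a b d -> low3 c2 a b d ->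
  (3 < #|M|)%N -> TwoRes c1 c2.
Proof.
move=> hm1 hm2 ab ad bd l1 l2 hM.
set C := a |: [set b; d].
have hC : ~: C != set0.
  case: (ex_out3 a b d hM) => z [za zb zd]; apply/set0Pn; exists z.
  by rewrite !inE !negb_or za zb zd.
case: (exmin (fun z => c1 [set z]) hC) => w.
rewrite !inE !negb_or => /andP [wa /andP [wb wd]] hw.
have hw' : forall z, z != a -> z != b -> z != d -> c1 [set w] <= c1 [set z].
  by move=> z za zb zd; apply: hw; rewrite !inE !negb_or za zb zd.
have [H|H] := boolP [forall e in C, forall z in ~: C, c1 (C :\ e) <= c1 [set z]].
  left; exists C; split.
    by rewrite /C cardsU1 cards2 !inE !negb_or ab ad bd.
  move=> e z eC zC; move/forallP: H => /(_ e) /implyP /(_ eC).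
  by move/forallP => /(_ z) /implyP; apply; rewrite inE.
move/forallPn: H => [e]; rewrite negb_imply => /andP [eC /forallPn [z]].
rewrite negb_imply inE => /andP [zC]; rewrite -ltNge => hz.
have hwz : c1 [set w] < c1 (C :\ e).
  by apply: le_lt_trans hz; apply: hw; rewrite inE.
case: (setD3 ab ad bd) => E1 E2 E3.
move: eC hwz; rewrite /C !inE => /orP [/eqP->|/orP [/eqP->|/eqP->]] hwz.
- rewrite E1 in hwz.
  apply: (L3core (e:=a) (u:=b) (v:=d) (w:=w)) => //; neq.
- rewrite E2 in hwz.
  apply: (L3core (e:=b) (u:=a) (v:=d) (w:=w)) => //; try neq.
  + exact: low3_bad.
  + exact: low3_bad.
  + by move=> z1 h1 h2 h3; apply: hw'.
- rewrite E3 in hwz.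
  apply: (L3core (e:=d) (u:=a) (v:=b) (w:=w)) => //; try neq.
  + exact: low3_dab.
  + exact: low3_dab.
  + by move=> z1 h1 h2 h3; apply: hw'.
Qed.


Lemma optB c a b x3 y3 : monotone c -> a != x3 -> low2 c a b ->
  (forall z, z != a -> z != b -> c [set x3] <= c [set z]) ->
  y3 != a -> y3 != b -> y3 != x3 -> heavyok c [set a; x3] [set b; y3].
Proof.
move=> hm ax hl hx ya yb yx; apply: pairok => //.
- move=> z z1 z2; rewrite !inE negb_or => /andP [z3 z4].
  split; last by apply: hx.
  by case: (hl z z1 z3).
- apply: le_trans (mono_pair hm b y3).2; by case: (hl y3 ya yb).
- apply: le_trans (mono_pair hm b y3).2; exact: hx.
Qed.

Lemma twoA c1 c2 a b : monotone c1 -> monotone c2 -> a != b ->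
  low2 c1 a b -> low2 c2 a b -> (3 < #|M|)%N -> TwoRes c1 c2.
Proof.
move=> hm1 hm2 ab l1 l2 hM.
have hA : ~: [set a; b] != set0.
  case: (ex_out3 a b a hM) => z [za zb _]; apply/set0Pn; exists z.
  by rewrite !inE !negb_or za zb.
case: (exmin (fun z => c1 [set z]) hA) => x3.
rewrite !inE !negb_or => /andP [x3a x3b] hx.
have hx' : forall z, z != a -> z != b -> c1 [set x3] <= c1 [set z].
  by move=> z za zb; apply: hx; rewrite !inE !negb_or za zb.
case: (exmin (fun z => c2 [set z]) hA) => y3.
rewrite !inE !negb_or => /andP [y3a y3b] hy.
have hy' : forall z, z != a -> z != b -> c2 [set y3] <= c2 [set z].
  by move=> z za zb; apply: hy; rewrite !inE !negb_or za zb.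
case: (eqVneq x3 y3) => [e|ne].
  rewrite -e in hy' y3a y3b.
  apply: (L3 (a:=a) (b:=b) (d:=x3)) => //; try neq.
  + move=> z za zb zx; case: (l1 z za zb) => h1 h2; split => //; exact: hx'.
  + move=> z za zb zx; case: (l2 z za zb) => h1 h2; split => //; exact: hy'.
right; exists a, x3, b, y3; split.
  by apply: uniq4; try neq.
split.
  apply: optB => //; neq.
apply: optB => //; try neq.
- exact: low2_sym.
- by move=> z zb za; apply: hy'.
Qed.

Lemma OneO c1 c2 s x y : monotone c1 -> monotone c2 ->
  s != x -> s != y -> x != y -> low2 c1 s x -> low2 c2 s y ->
  (3 < #|M|)%N -> TwoRes c1 c2.
Proof.
move=> hm1 hm2 sx sy xy l1 l2 hM.
set D := s |: [set x; y].
have hD : ~: D != set0.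
  case: (ex_out3 s x y hM) => z [za zb zd]; apply/set0Pn; exists z.
  by rewrite !inE !negb_or za zb zd.
case: (exmin (fun z => c1 [set z]) hD) => w1.
rewrite !inE !negb_or => /andP [w1s /andP [w1x w1y]] hw1.
have hw1' : forall z, z != s -> z != x -> z != y -> c1 [set w1] <= c1 [set z].
  by move=> z za zb zd; apply: hw1; rewrite !inE !negb_or za zb zd.
case: (exmin (fun z => c2 [set z]) hD) => w2.
rewrite !inE !negb_or => /andP [w2s /andP [w2x w2y]] hw2.
have hw2' : forall z, z != s -> z != x -> z != y -> c2 [set w2] <= c2 [set z].
  by move=> z za zb zd; apply: hw2; rewrite !inE !negb_or za zb zd.
case: (leP (c1 [set w1]) (c1 [set s; y])) => h1.
  right; exists x, w1, s, y; split.
    by apply: uniq4; try neq.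
  split.
    apply: optA => //; try neq.
  apply: optD => //; neq.
case: (leP (c2 [set w2]) (c2 [set s; x])) => h2.
  right; exists s, x, y, w2; split.
    by apply: uniq4; try neq.
  split.
    apply: optD => //; neq.
  apply: optA => //; try neq.
  by move=> z zs zy zx; apply: hw2'.
apply: (L3 (a:=s) (b:=x) (d:=y)) => //.
- move=> z zs zx zy; case: (l1 z zs zx) => h3 h4; split => //.
  apply: le_trans (mono_pair hm1 s y).2 _.
  apply: le_trans (ltW h1) _; exact: hw1'.
- move=> z zs zx zy; case: (l2 z zs zy) => h3 h4; split => //.
  apply: le_trans (mono_pair hm2 s x).2 _.
  apply: le_trans (ltW h2) _; exact: hw2'.
Qed.

Lemma two_agents c1 c2 : monotone c1 -> monotone c2 -> (3 < #|M|)%N -> TwoRes c1 c2.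
Proof.
move=> hm1 hm2 hM.
have hT : [set: M] != set0 by rewrite -card_gt0 cardsT; apply: ltn_trans hM.
have hT1 : forall x0 : M, [set~ x0] != set0.
  move=> x0; rewrite -card_gt0 cardsC1; by case: #|M| hM => [|[|k]].
case: (exmin (fun z => c1 [set z]) hT) => x1 _ hx1.
case: (exmin (fun z => c1 [set z]) (hT1 x1)) => x2; rewrite !inE => x21 hx2.
case: (exmin (fun z => c2 [set z]) hT) => y1 _ hy1.
case: (exmin (fun z => c2 [set z]) (hT1 y1)) => y2; rewrite !inE => y21 hy2.
have lx : low2 c1 x1 x2.
  move=> z z1 z2; split; [apply: hx1; exact: in_setT | apply: hx2; by rewrite !inE].
have ly : low2 c2 y1 y2.
  move=> z z1 z2; split; [apply: hy1; exact: in_setT | apply: hy2; by rewrite !inE].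
have x12 : x1 != x2 by rewrite eq_sym.
have y12 : y1 != y2 by rewrite eq_sym.
have [h1|h1] := boolP (y1 \in [set x1; x2]);
have [h2|h2] := boolP (y2 \in [set x1; x2]).
- move: h1 h2; rewrite !inE => /orP [/eqP e1|/eqP e1] /orP [/eqP e2|/eqP e2];
    subst; rewrite ?eqxx in y12 y21 x21 x12 => //.
  + exact: (twoA hm1 hm2 x12 lx ly hM).
  + exact: (twoA hm1 hm2 x12 lx (low2_sym ly) hM).
- move: h1; rewrite !inE => /orP [/eqP e1|/eqP e1]; subst.
  + move: h2; rewrite !inE negb_or => /andP [h3 h4].
    apply: (OneO (s:=x1) (x:=x2) (y:=y2)) => //; neq.
  + move: h2; rewrite !inE negb_or => /andP [h3 h4].
    apply: (OneO (s:=x2) (x:=x1) (y:=y2)) => //; try neq.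
    exact: low2_sym.
- move: h2; rewrite !inE => /orP [/eqP e1|/eqP e1]; subst.
  + move: h1; rewrite !inE negb_or => /andP [h3 h4].
    apply: (OneO (s:=x1) (x:=x2) (y:=y1)) => //; try neq.
    exact: low2_sym.
  + move: h1; rewrite !inE negb_or => /andP [h3 h4].
    apply: (OneO (s:=x2) (x:=x1) (y:=y1)) => //; try neq.
    * exact: low2_sym.
    * exact: low2_sym.
- move: h1 h2; rewrite !inE !negb_or => /andP [h3 h4] /andP [h5 h6].
  right; exists x1, x2, y1, y2; split.
    by apply: uniq4; try neq.
  split; apply: optD => //; neq.
Qed.

End Two.

Section Frame.
Variables (n : nat) (M : finType).

Lemma build (H : {set M}) (K : {set 'I_n}) (g0 : M -> 'I_n) :
  #|~: H| = #|~: K| -> (forall e, e \in H -> g0 e \in K) ->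
  exists g : M -> 'I_n, [/\ forall e, e \in H -> g e = g0 e,
     forall e, e \notin H -> g e \notin K &
     forall j, j \notin K -> exists2 z, z \notin H & [set e | g e == j] = [set z]].
Proof.
move=> hc hg.
pose sA := enum (~: H); pose sB := enum (~: K).
have hs : size sA = size sB by rewrite -!cardE.
have uA : uniq sA := enum_uniq _.
have uB : uniq sB := enum_uniq _.
exists (fun e => if e \in H then g0 e else nth (g0 e) sB (index e sA)).
have P2 : forall e, e \notin H -> nth (g0 e) sB (index e sA) \notin K.
  move=> e eH.
  have : nth (g0 e) sB (index e sA) \in sB.
    by apply: mem_nth; rewrite -hs index_mem mem_enum inE.
  by rewrite mem_enum inE.
split.
- by move=> e ->.
- by move=> e eH; rewrite (negbTE eH); apply: P2.
move=> j jK.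
have jB : j \in sB by rewrite mem_enum inE.
have kB : (index j sB < size sB)%N by rewrite index_mem.
have [z0 _] : exists z0 : M, true.
  move: kB; rewrite -hs /sA; case: (enum (~: H)) => [|z0 s] //= _; by exists z0.
pose z := nth z0 sA (index j sB).
have zA : z \in sA by apply: mem_nth; rewrite hs.
exists z; first by move: zA; rewrite mem_enum inE.
apply/setP => e; rewrite !inE.
case: (boolP (e \in H)) => eH.
  have -> : (g0 e == j) = false.
    by apply/negbTE; apply/eqP => E; move: (hg e eH); rewrite E (negbTE jK).
  apply/esym/negbTE; apply/eqP => E; move: zA; rewrite -E mem_enum inE eH //.
have eA : e \in sA by rewrite mem_enum inE.
apply/eqP/eqP => [E|->].
  have : index (nth (g0 e) sB (index e sA)) sB = index j sB by rewrite E.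
  rewrite index_uniq //; last by rewrite -hs index_mem.
  by rewrite /z => <-; rewrite nth_index.
rewrite /z index_uniq //; last by rewrite hs.
by rewrite nth_index.
Qed.


Variables (R : realType) (c : 'I_n -> {set M} -> R).
Hypotheses (hnonneg : forall i, nonneg_cost (c i))
  (hnorm : forall i, normalized (c i)) (hmono : forall i, monotone (c i)).

Definition bund (H : {set M}) (g0 : M -> 'I_n) i := [set e in H | g0 e == i].

Lemma alloc_of (g : M -> 'I_n) : is_allocation (fun i => [set e | g e == i]).
Proof.
split.
  move=> i j ij; rewrite -setI_eq0; apply/eqP/setP => e; rewrite !inE.
  apply/negbTE/negP => /andP [/eqP h1 /eqP h2].
  by rewrite -h1 -h2 eqxx in ij.
apply/setP => e; rewrite inE; apply/bigcupP; exists (g e) => //; by rewrite inE.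
Qed.

Lemma small_ok (X : 'I_n -> {set M}) i j e :
  (forall e', e' \in X i -> e' = e) -> e \in X i -> c i (X i :\ e) <= c i (X j).
Proof.
move=> h eX.
have -> : X i :\ e = set0.
  apply/setP => x; rewrite !inE; apply/negbTE/negP => /andP [xe /h xE].
  by rewrite xE eqxx in xe.
by rewrite hnorm; apply: hnonneg.
Qed.

Lemma frame (H : {set M}) (K : {set 'I_n}) (g0 : M -> 'I_n) :
  #|~: H| = #|~: K| -> (forall e, e \in H -> g0 e \in K) ->
  (forall i j, i \in K -> j \in K -> i != j -> forall e, e \in bund H g0 i ->
      c i (bund H g0 i :\ e) <= c i (bund H g0 j)) ->
  (forall i, i \in K -> forall e z, e \in bund H g0 i -> z \notin H ->
      c i (bund H g0 i :\ e) <= c i [set z]) ->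
  exists X, is_allocation X /\ EFX c X.
Proof.
move=> hc hg h1 h2.
case: (build hc hg) => g [g1 g2 g3].
exists (fun i => [set e | g e == i]); split; first exact: alloc_of.
have XK : forall i, i \in K -> [set e | g e == i] = bund H g0 i.
  move=> i iK; apply/setP => e; rewrite !inE.
  case: (boolP (e \in H)) => eH /=; first by rewrite g1.
  apply/negbTE/eqP => E; move: (g2 e eH); by rewrite E iK.
move=> i j e.
case: (boolP (i \in K)) => iK.
  rewrite XK // => eB.
  case: (boolP (j \in K)) => jK.
    rewrite XK //.
    case: (eqVneq i j) => [<-|ij]; last exact: h1.
    apply: mono_sub => //; exact: subD1set.
  case: (g3 j jK) => z zH ->.
  exact: h2.
case: (g3 i iK) => z zH E.
move=> eX; have ez : e = z by move: eX; rewrite E inE => /eqP.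
apply: (small_ok (X := fun i => [set e | g e == i])) eX => e'.
by rewrite E inE => /eqP ->.
Qed.


Lemma small_case : (#|M| <= n)%N -> exists X, is_allocation X /\ EFX c X.
Proof.
move=> hmn.
pose g := fun e : M => widen_ord hmn (enum_rank e).
exists (fun i => [set e | g e == i]); split; first exact: alloc_of.
move=> i j e eX; have eX' := eX.
apply: (small_ok (X := fun i => [set e | g e == i])) eX => e'.
move: eX'; rewrite !inE => /eqP <- /eqP E.
have := congr1 val E; rewrite /= => /val_inj; exact: enum_rank_inj.
Qed.

End Frame.

Lemma exists_low2 (R : realType) (M : finType) (c : {set M} -> R) :
  (1 < #|M|)%N -> exists x1 x2, x1 != x2 /\ low2 c x1 x2.
Proof.
move=> hM.
have hT : [set: M] != set0 by rewrite -card_gt0 cardsT; apply: ltn_trans hM.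
have hT1 : forall x0 : M, [set~ x0] != set0.
  by move=> x0; rewrite -card_gt0 cardsC1; case: #|M| hM => [|[|k]].
case: (exmin (fun z => c [set z]) hT) => x1 _ hx1.
case: (exmin (fun z => c [set z]) (hT1 x1)) => x2; rewrite !inE => x21 hx2.
exists x1, x2; split; first by rewrite eq_sym.
move=> z z1 z2; split; [apply: hx1; exact: in_setT | apply: hx2; by rewrite !inE].
Qed.

Lemma uniq4_inv (M : finType) (p p' q q' : M) : uniq [:: p; p'; q; q'] ->
  [/\ p != q, p != q', p' != q & p' != q'].
Proof.
rewrite /= !inE !negb_or => /and4P [/and3P [_ h1 h2] /andP [h3 h4] _ _].
by split.
Qed.

Unset Implicit Arguments.
Set Strict Implicit.

Theorem theorem4 (R : realType) (n : nat) (M : finType)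
    (c : 'I_n -> {set M} -> R)
    (hn : (0 < n)%N)
    (hm : (#|M| <= n + 2)%N)
    (hnonneg : forall i, nonneg_cost (c i))
    (hnorm : forall i, normalized (c i))
    (hmono : forall i, monotone (c i)) :
  exists X : 'I_n -> {set M}, is_allocation X /\ EFX c X.
Proof.
have [hmn|hnm] := leqP #|M| n.
  exact: small_case.
pose i0 : 'I_n := Ordinal hn.
have [e1|e2] : #|M| = n.+1 \/ #|M| = n.+2 by lia.
  have [x1 [x2 [x12 lx]]] : exists x1 x2, x1 != x2 /\ low2 (c i0) x1 x2.
    by apply: exists_low2; lia.
  apply: (frame hnonneg hnorm hmono (H := [set x1; x2]) (K := [set i0])
            (g0 := fun _ => i0)).
  - have := cardsC [set x1; x2]; have := cardsC [set i0].
    rewrite cards2 x12 cards1 card_ord e1 /=; move: (#|~: [set x1; x2]|) (#|[set~ i0]|) => a b; lia.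
  - by move=> *; rewrite inE.
  - by move=> i j; rewrite !inE => /eqP -> /eqP ->; rewrite eqxx.
  - move=> i; rewrite inE => /eqP -> e z.
    have -> : bund [set x1; x2] (fun _ => i0) i0 = [set x1; x2].
      by apply/setP => x; rewrite !inE eqxx andbT.
    rewrite !inE => /orP [/eqP->|/eqP->]; rewrite ?setD2l ?setD2r //; rewrite negb_or => /andP [z1 z2]; by case: (lx z z1 z2).
have [hn1|hn1] := leqP n 1.
  apply: (frame hnonneg hnorm hmono (H := [set: M]) (K := [set: 'I_n])
            (g0 := fun _ => i0)).
  - by rewrite !setCT !cards0.
  - by move=> *; rewrite in_setT.
  - move=> i j _ _; case/negP; apply/eqP/val_inj.
    case: i => a ha; case: j => b hb /=; lia.
  - by move=> i _ e z _; rewrite in_setT.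
pose i1 : 'I_n := Ordinal hn.
pose i2 : 'I_n := Ordinal hn1.
have i12 : i1 != i2 by [].
case: (two_agents (hmono i1) (hmono i2) _) => [|[T [hT tok]]|[p [p' [q [q' [hu [hk1 hk2]]]]]]].
- lia.
- apply: (frame hnonneg hnorm hmono (H := T) (K := [set i1])
            (g0 := fun _ => i1)).
  + have := cardsC T; have := cardsC [set i1].
    rewrite cards1 card_ord e2 hT; move: (#|~: T|) (#|[set~ i1]|) => a b; lia.
  + by move=> *; rewrite inE.
  + by move=> i j; rewrite !inE => /eqP -> /eqP ->; rewrite eqxx.
  + move=> i; rewrite inE => /eqP -> e z.
    have -> : bund T (fun _ => i1) i1 = T.
      by apply/setP => x; rewrite !inE eqxx andbT.
    by move=> eT zT; apply: tok.
- case: (uniq4_inv hu) => pq pq' p'q p'q'.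
  set P := [set p; p']; set Q := [set q; q'].
  have dPQ : forall x, x \in P -> x \notin Q.
    move=> x; rewrite !inE => /orP [/eqP->|/eqP->]; rewrite negb_or; apply/andP; split => //.
  pose g0 := fun e => if e \in P then i1 else i2.
  have B1 : bund (P :|: Q) g0 i1 = P.
    apply/setP => x; rewrite /bund inE in_setU /g0.
    case: (boolP (x \in P)) => xP /=; first by rewrite eqxx.
    by rewrite eq_sym (negbTE i12) andbF.
  have B2 : bund (P :|: Q) g0 i2 = Q.
    apply/setP => x; rewrite /bund inE in_setU /g0.
    case: (boolP (x \in P)) => xP /=.
      by rewrite (negbTE i12); apply/esym/negbTE; exact: dPQ.
    by rewrite eqxx andbT.
  apply: (frame hnonneg hnorm hmono (H := P :|: Q) (K := [set i1; i2]) (g0 := g0)).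
  + have -> : P :|: Q = [set x in [:: p; p'; q; q']].
      by apply/setP => x; rewrite !inE !orbA.
    have := cardsC [set x in [:: p; p'; q; q']]; have := cardsC [set i1; i2].
    have c4 : #|[set x in [:: p; p'; q; q']]| = 4%N.
      by rewrite cardsE; apply/card_uniqP.
    rewrite c4 cards2 i12 card_ord e2 /=.
    move: (#|~: [set x in [:: p; p'; q; q']]|) (#|~: [set i1; i2]|) => a b; lia.
  + by move=> e _; rewrite /g0; case: ifP; rewrite !inE eqxx ?orbT.
  + move=> i j; rewrite !inE => /orP [/eqP->|/eqP->] /orP [/eqP->|/eqP->];
      rewrite ?eqxx // => _ e; rewrite ?B1 ?B2 => eB; [case: (hk1 e eB) | case: (hk2 e eB)] => //.
  + move=> i; rewrite !inE => /orP [/eqP->|/eqP->] e z; rewrite ?B1 ?B2 => eB;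
      rewrite !inE negb_or => /andP [zP zQ].
    * case: (hk1 e eB) => _; apply; by rewrite /P ?inE.
    * case: (hk2 e eB) => _; apply; by rewrite /Q ?inE.
Qed.
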